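(* Let $A=(A,\wedge,\vee,\cdot,\to,1)$ be an algebra of type $(2,2,2,2,0)$ satisfying conditions (1)–(8) below. Then $A$ satisfies condition (9) if and only if for all $a,b,c,d\in A$, $(a\to b)\cdot(c\to d)\le (a\cdot c)\to(b\cdot d)$.
   Context: Conditions, for all $a,b,c\in A$: (1) $(A,\wedge,\vee)$ is a distributive lattice (with order $\le$); (2) $1$ is its largest element; (3) $(A,\cdot,1)$ is a commutative monoid; (4) $(a\to b)\wedge(a\to c)=a\to(b\wedge c)$; (5) $(a\to c)\wedge(b\to c)=(a\vee b)\to c$; (6) $a\to a=1$; (7) $(a\vee b)\cdot c=(a\cdot c)\vee(b\cdot c)$; (8) $(a\to b)\cdot(b\to c)\le a\to c$; (9) $a\to b\le (a\cdot c)\to(b\cdot c)$. *)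

(* Defs.v *)
Section Alg.
Variables (A : Type) (meet join mul imp : A -> A -> A) (one : A).

(* (1) (A, meet, join) is a distributive lattice. *)
Definition distr_lattice : Prop :=
  (forall a b, meet a b = meet b a) /\
  (forall a b, join a b = join b a) /\
  (forall a b c, meet a (meet b c) = meet (meet a b) c) /\
  (forall a b c, join a (join b c) = join (join a b) c) /\
  (forall a b, meet a (join a b) = a) /\
  (forall a b, join a (meet a b) = a) /\
  (forall a b c, meet a (join b c) = join (meet a b) (meet a c)).

Definition lat_le (a b : A) : Prop := meet a b = a.

Definition cond1to8 : Prop :=
  distr_lattice /\
  (forall a, lat_le a one) /\                                         (* (2) *)
  ((forall a b c, mul a (mul b c) = mul (mul a b) c) /\
   (forall a b, mul a b = mul b a) /\ (forall a, mul a one = a)) /\    (* (3) *)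
  (forall a b c, meet (imp a b) (imp a c) = imp a (meet b c)) /\       (* (4) *)
  (forall a b c, meet (imp a c) (imp b c) = imp (join a b) c) /\       (* (5) *)
  (forall a, imp a a = one) /\                                         (* (6) *)
  (forall a b c, mul (join a b) c = join (mul a c) (mul b c)) /\       (* (7) *)
  (forall a b c, lat_le (mul (imp a b) (imp b c)) (imp a c)).          (* (8) *)

Definition cond9 : Prop :=
  forall a b c, lat_le (imp a b) (imp (mul a c) (mul b c)).

End Alg.

(* Main.v *)
Require Import Defs.

Theorem lemma2p7 (A : Type) (meet join mul imp : A -> A -> A) (one : A) :
  cond1to8 A meet join mul imp one ->
  (cond9 A meet mul imp <->
   forall a b c d : A,
     lat_le A meet (mul (imp a b) (imp c d)) (imp (mul a c) (mul b d))).
Proof.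
  intros [[mC [jC [mA [jA [ab1 [ab2 dis]]]]]] [H2 [[mulA [mulC mul1]] [H4 [H5 [H6 [H7 H8]]]]]]].
  unfold cond9, lat_le in *.
  assert (toj : forall x y, meet x y = x -> join x y = y).
  { intros x y h. rewrite <- h, jC, mC. apply ab2. }
  assert (fromj : forall x y, join x y = y -> meet x y = x).
  { intros x y h. rewrite <- h. apply ab1. }
  assert (trans : forall x y z, meet x y = x -> meet y z = y -> meet x z = x).
  { intros x y z h1 h2. rewrite <- h1, <- mA, h2. reflexivity. }
  assert (mono : forall x y z, meet x y = x -> meet (mul x z) (mul y z) = mul x z).
  { intros x y z h. apply fromj. rewrite <- H7, toj; auto. }
  split.
  - intros h9 a b c d.
    apply trans with (mul (imp (mul a c) (mul b c)) (imp c d)).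
    + apply mono, h9.
    + apply trans with (mul (imp (mul a c) (mul b c)) (imp (mul b c) (mul b d))).
      * rewrite (mulC _ (imp c d)), (mulC _ (imp (mul b c) _)).
        apply mono. rewrite (mulC b c), (mulC b d). apply h9.
      * apply H8.
  - intros h a b c. specialize (h a b c c). rewrite H6, mul1 in h. exact h.
Qed.
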